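(* Let $X$ be a countable $P$-space. Then $\Sigma\mathcal O(X)$ is sober.
   Context: $\mathcal O(X)$ is the lattice of open subsets of $X$ ordered by inclusion, and $\Sigma\mathcal O(X)$ is this lattice with its Scott topology (a set $U$ is Scott open iff it is an upper set and for every directed $D$, $\bigvee D\in U$ implies $D\cap U\neq\emptyset$). A space is a $P$-space if countable intersections of open sets are open. A $T_0$ space is sober if every irreducible closed set equals $\overline{\{x\}}$ for some point $x$. *)

(* Defs.v *)
From HB Require Import structures.
From mathcomp Require Import all_boot all_order.
From mathcomp Require Import classical_sets boolp cardinality topology.
Set Implicit Arguments. Unset Strict Implicit. Unset Printing Implicit Defensive.
Local Open Scope classical_set_scope.

(** P-space: countable intersections of open sets are open
    (countable families indexed by nat; finite ones by repetition). *)
Definition P_space (X : topologicalType) : Prop :=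
  forall F : nat -> set X, (forall n, open (F n)) -> open (\bigcap_n F n).

Record opens (X : topologicalType) := Opens {
  oset : set X ;
  oset_open : open oset }.

Definition opens_le (X : topologicalType) (U V : opens X) : Prop :=
  oset U `<=` oset V.

Section Scott.
Variables (T : Type) (le : T -> T -> Prop).

Definition directed (D : set T) : Prop :=
  D !=set0 /\ forall x y, D x -> D y -> exists2 z, D z & le x z /\ le y z.

Definition is_sup (D : set T) (s : T) : Prop :=
  (forall d, D d -> le d s) /\ (forall u, (forall d, D d -> le d u) -> le s u).

Definition upper_set (U : set T) : Prop :=
  forall x y, U x -> le x y -> U y.

Definition scott_open (U : set T) : Prop :=
  upper_set U /\
  forall D s, directed D -> is_sup D s -> U s -> D `&` U !=set0.
End Scott.

Section Space.
Variables (T : Type) (isOpen : set (set T)).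

Definition sp_closed (C : set T) : Prop := isOpen (~` C).

Definition sp_closure (A : set T) : set T :=
  fun x => forall C, sp_closed C -> A `<=` C -> C x.

Definition sp_irreducible (F : set T) : Prop :=
  F !=set0 /\
  forall A B, sp_closed A -> sp_closed B -> F `<=` A `|` B -> F `<=` A \/ F `<=` B.

Definition sp_T0 : Prop :=
  forall x y, x <> y -> exists2 U, isOpen U & (U x /\ ~ U y) \/ (U y /\ ~ U x).

Definition sp_sober : Prop :=
  sp_T0 /\
  forall F, sp_closed F -> sp_irreducible F -> exists x, F = sp_closure [set x].
End Space.

Definition SigmaO_sober (X : topologicalType) : Prop :=
  sp_sober (scott_open (@opens_le X)).

(* Main.v *)
Require Import Defs.
From mathcomp Require Import all_boot classical_sets cardinality topology.
From mathcomp Require Import boolp.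
Local Open Scope classical_set_scope.

Section Aux.
Variable X : topologicalType.
Local Notation le := (@opens_le X).
Local Notation sopen := (scott_open le).

Lemma opens_eq (U V : opens X) : oset U = oset V -> U = V.
Proof.
case: U V => [u hu] [v hv] /= e; subst v; congr Opens; exact: Prop_irrelevance.
Qed.

Lemma sup_union (D : set (opens X)) s : is_sup le D s ->
  forall x, oset s x -> exists2 d, D d & oset d x.
Proof.
move=> [_ Hs] x sx.
pose u := Opens (bigcup_open (fun d (_ : D d) => oset_open d)).
have : le s u.
  by apply: Hs => d Dd y dy; exists d.
move=> /(_ x sx) [d Dd dx]; by exists d.
Qed.

Lemma pt_open (q : X) : sopen (fun W => oset W q).
Proof.
split; first by move=> x y xq xy; apply: xy.
move=> D s _ Hs sq; have [d Dd dq] := @sup_union D s Hs q sq; by exists d.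
Qed.

Lemma setI_open (U V : set (opens X)) : sopen U -> sopen V -> sopen (U `&` V).
Proof.
move=> [uU sU] [uV sV]; split.
  by move=> x y [Ux Vx] xy; split; [apply: uU Ux xy | apply: uV Vx xy].
move=> D s Dd Hs [Us Vs].
have [d1 [D1 U1]] := sU D s Dd Hs Us.
have [d2 [D2 V2]] := sV D s Dd Hs Vs.
have [z Dz [l1 l2]] := Dd.2 _ _ D1 D2.
exists z; split => //; split; [exact: uU U1 l1 | exact: uV V2 l2].
Qed.

Lemma closed_lower (F : set (opens X)) : sp_closed sopen F ->
  forall W V, F W -> le V W -> F V.
Proof.
move=> [up _] W V FW VW; apply: contrapT => nFV.
exact: (up V W nFV VW FW).
Qed.

Lemma irr_meet (F : set (opens X)) U V : sp_irreducible sopen F ->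
  sopen U -> sopen V -> (U `&` F !=set0) -> (V `&` F !=set0) ->
  ((U `&` V) `&` F !=set0).
Proof.
move=> [_ Hirr] oU oV [a [Ua Fa]] [b [Vb Fb]].
apply: contrapT => Hn.
have cU : sp_closed sopen (~` U) by rewrite /sp_closed setCK.
have cV : sp_closed sopen (~` V) by rewrite /sp_closed setCK.
have : F `<=` ~` U `|` ~` V.
  move=> w Fw; apply: contrapT => h; apply: Hn; exists w; split => //.
  split; apply: contrapT => h'; apply: h; by [left | right].
case/(Hirr _ _ cU cV) => H; [exact: (H a Fa Ua) | exact: (H b Fb Vb)].
Qed.

End Aux.
Arguments closed_lower {X F}.
Arguments irr_meet {X F U V}.

Theorem corollary4p7 (X : topologicalType) :
  countable [set: X] -> P_space X -> SigmaO_sober X.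
Proof.
move=> /countable_injP [f finj] HP; split.
  move=> x y xy.
  have : oset x <> oset y by move=> e; apply: xy; exact: opens_eq.
  move=> ne.
  have [a Ha] : exists a, ~ (oset x a <-> oset y a).
    apply: contrapT => h; apply: ne; apply/funext => a; apply/propext.
    by apply: contrapT => h'; apply: h; exists a.
  exists (fun W : opens X => oset W a); first exact: pt_open.
  case: (pselect (oset x a)) => xa.
    by left; split => // ya; apply: Ha.
  right; split => //.
  by apply: contrapT => ya; apply: Ha; split.
move=> F cF iF.
pose S := \bigcup_(W in F) oset W.
have Sop : open S by apply: bigcup_open => W _; exact: oset_open.
pose Sx := Opens Sop.
pose H n := fun W : opens X => forall q, f q = n -> S q -> oset W q.
have HopenF : forall n, scott_open (@opens_le X) (H n) /\ (H n `&` F !=set0).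
  move=> n; case: (pselect (exists q, f q = n /\ S q)) => [[q [fq Sq]]|nq].
    have eH : H n = (fun W => oset W q).
      apply/funext => W; apply/propext; split; first by move/(_ q fq Sq).
      move=> Wq q' fq' _; suff -> : q' = q by [].
      by apply: finj; rewrite ?in_setT // fq fq'.
    rewrite eH; split; first exact: pt_open.
    by case: Sq => W FW Wq; exists W.
  have eH : H n = setT.
    apply/funext => W; apply/propext; split => // _ q fq Sq.
    by exfalso; apply: nq; exists q.
  rewrite eH; split.
    split => //; move=> D s [[d Dd] _] _ _; by exists d.
  by case: iF => [[W FW] _]; exists W.
pose G n := fun W : opens X => forall q, (f q <= n)%N -> S q -> oset W q.
have HG : forall n, scott_open (@opens_le X) (G n) /\ (G n `&` F !=set0).
  elim=> [|n [IHo IHm]].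
    have -> : G 0%N = H 0%N.
      apply/funext => W; apply/propext; split.
        by move=> h q fq; apply: h; rewrite fq.
      by move=> h q; rewrite leqn0 => /eqP; apply: h.
    exact: HopenF.
  have -> : G n.+1 = G n `&` H n.+1.
    apply/funext => W; apply/propext; split.
      move=> h; split; first by move=> q fq; apply: h; apply: leqW.
      by move=> q fq; apply: h; rewrite fq.
    move=> [h1 h2] q; rewrite leq_eqVlt => /orP [/eqP e|l].
      exact: h2.
    exact: h1.
  have [Ho Hm] := HopenF n.+1.
  split; first exact: setI_open.
  exact: irr_meet.
have [Wf HW] := choice (fun n => (HG n).2).
pose C n := \bigcap_k oset (Wf (n + k)%N).
have Copen : forall n, open (C n) by move=> n; apply: HP => k; exact: oset_open.
pose Co n := Opens (Copen n).
have CF : forall n, F (Co n).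
  move=> n; apply: (closed_lower cF _ _ (HW n).2) => x /= Cx.
  by have := Cx 0%N I; rewrite addn0.
have Cmono : forall n m, (n <= m)%N -> C n `<=` C m.
  move=> n m nm x Cx k _; have := Cx (m - n + k)%N I.
  by rewrite addnA subnKC.
have SF : F Sx.
  apply: contrapT => nS.
  have [_ Hsc] := cF.
  have Dd : directed (@opens_le X) (range Co).
    split; first by exists (Co 0%N), 0%N.
    move=> _ _ [n _ <-] [m _ <-]; exists (Co (maxn n m)); first by exists (maxn n m).
    by split; apply: Cmono; [apply: leq_maxl | apply: leq_maxr].
  have Hsup : is_sup (@opens_le X) (range Co) Sx.
    split.
      move=> _ [n _ <-] x /= Cx; exists (Wf n); first exact: (HW n).2.
      by have := Cx 0%N I; rewrite addn0.
    move=> u Hu x /= Sxx.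
    apply: (Hu (Co (f x))); first by exists (f x).
    move=> k _; apply: (HW (f x + k)%N).1 => //; exact: leq_addr.
  have [d [[n _ <-] nFd]] := Hsc _ _ Dd Hsup nS.
  exact: nFd (CF n).
exists Sx; apply/funext => W; apply/propext; split.
  move=> FW K cK sub; apply: (closed_lower cK _ _ (sub Sx erefl)).
  by move=> x Wx; exists W.
by move=> h; apply: h cF _ => _ ->.
Qed.
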